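(* Let $\gamma\ge0$ and $\alpha_i,\beta_i\ge0$ with $\gamma+\sum_i\alpha_i+\sum_i\beta_i=1$. The separation distance between the distribution of $k$ successive (independent) applications of an $(\vec{\alpha},\vec{\beta},\gamma)$ shuffle to an $n$-card deck and the uniform distribution on $S_n$ is at most \[ \binom{n}{2}\Big[\sum_i \alpha_i^2+\sum_i\beta_i^2\Big]^k .\]
   Context: An $(\vec{\alpha},\vec{\beta},\gamma)$ shuffle of $n$ cards is the random permutation $\pi$ of $\{1,\dots,n\}$ produced as follows. Choose a word of length $n$ of integers with independent letters, letter $i>0$ with probability $\alpha_i$, letter $-i$ ($i>0$) with probability $\beta_i$, letter $0$ with probability $\gamma$. Process the occurring letter values in increasing order of the integers, assigning consecutive blocks of $\{1,\dots,n\}$ starting from $1$: a negative value's block is written at its positions in decreasing order from left to right; the block of $0$ is written at its positions in uniformly random order; a positive value's block is written at its positions in increasing order from left to right. $\pi(p)$ is the integer at position $p$. The separation distance between a probability $P$ on $S_n$ and the uniform distribution $U$ is $\max_{\pi\in S_n}\big(1-\frac{P(\pi)}{U(\pi)}\big)$. *)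

(* Defs.v *)
From HB Require Import structures.
From mathcomp Require Import all_boot all_order all_algebra all_fingroup.
From mathcomp Require Import all_classical all_reals.
From mathcomp Require Import topology normedtype sequences esum.
Set Implicit Arguments. Unset Strict Implicit. Unset Printing Implicit Defensive.
Import Order.TTheory GRing.Theory Num.Theory.
Local Open Scope ring_scope.

Section Shuffle.
Variable R : realType.
Variable n : nat.

(* probability of letter z : letter 0 has prob g, letter i>0 has prob a (i-1),
   letter -i (i>0) has prob b (i-1), i.e. a i = alpha_{i+1}, b i = beta_{i+1}. *)
Definition letterp (g : R) (a b : nat -> R) (z : int) : R :=
  match z with
  | Posz 0 => g
  | Posz (S i) => a i
  | Negz i => b i
  end.

Definition word_weight (g : R) (a b : nat -> R) (w : {ffun 'I_n -> int}) : R :=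
  \prod_(j : 'I_n) letterp g a b (w j).

(* the (0-based) value written at position p, given the word w and a
   permutation t used to fix the (uniformly random) order in which the
   block of letter 0 is written: the zero positions receive the block in the
   order of their t-values. *)
Definition shuffle_value (w : {ffun 'I_n -> int}) (t : 'S_n) (p : 'I_n) : nat :=
  #|[set q : 'I_n | w q < w p]| +
  (if 0 < w p then #|[set q : 'I_n | (w q == w p) && (q < p)%N]|
   else if w p < 0 then #|[set q : 'I_n | (w q == w p) && (p < q)%N]|
   else #|[set q : 'I_n | (w q == 0) && (t q < t p)%N]|).

(* conditional probability that the shuffle outputs s given the word w
   (t uniform on S_n induces the uniform random order of the 0 block) *)
Definition shuffle_cond (w : {ffun 'I_n -> int}) (s : 'S_n) : R :=
  #|[set t : 'S_n | [forall p, nat_of_ord (s p) == shuffle_value w t p]]|%:R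
    / (n`!)%:R.

Definition shuffle1 (g : R) (a b : nat -> R) (s : 'S_n) : R :=
  fine (\esum_(w in [set: {ffun 'I_n -> int}])
          (word_weight g a b w * shuffle_cond w s)%:E).

Fixpoint shufflek (g : R) (a b : nat -> R) (k : nat) (s : 'S_n) : R :=
  match k with
  | 0 => (s == 1%g)%:R
  | k'.+1 => \sum_(t : 'S_n) shuffle1 g a b t * shufflek g a b k' (t^-1 * s)%g
  end.

Definition unif (s : 'S_n) : R := ((n`!)%:R)^-1.

Definition sep_dist (P : 'S_n -> R) : R :=
  \big[Num.max/(1 - P 1%g / unif 1%g)]_(s : 'S_n) (1 - P s / unif s).

End Shuffle.

(* Main.v *)
Require Import Defs.
From HB Require Import structures.
From mathcomp Require Import all_boot all_order all_algebra all_fingroup.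
From mathcomp Require Import all_classical all_reals.
From mathcomp Require Import topology normedtype sequences esum ereal.
From mathcomp Require Import zify lra.
Import Order.TTheory GRing.Theory Num.Theory numFieldNormedType.Exports.
Set Implicit Arguments. Unset Strict Implicit. Unset Printing Implicit Defensive.
Local Open Scope ring_scope.

Section Order.
Variable n : nat.

Definition sto (B : rel 'I_n) :=
  [/\ forall p, B p p = false, forall x y z, B x y -> B y z -> B x z &
      forall p q, p != q -> B p q || B q p].

Definition lexr (K : 'I_n -> int) (C : int -> rel 'I_n) : rel 'I_n :=
  fun q p => (K q < K p) || ((K q == K p) && C (K p) q p).

Lemma sto_lexr K C : (forall v, sto (C v)) -> sto (lexr K C).
Proof.
move=> HC; split.
- by move=> p; rewrite /lexr ltxx eqxx /=; case: (HC (K p)).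
- move=> x y z; rewrite /lexr => /orP[Hxy|/andP[/eqP Exy Cxy]] /orP[Hyz|/andP[/eqP Eyz Cyz]].
  + by rewrite (lt_trans Hxy Hyz).
  + by rewrite -Eyz Hxy.
  + by rewrite Exy Hyz.
  + apply/orP; right; rewrite Exy Eyz eqxx /=.
    case: (HC (K z)) => _ Ht _; apply: Ht Cyz; by rewrite -Eyz.
- move=> p q Hpq; rewrite /lexr.
  case: (ltgtP (K p) (K q)) => [//|//|E]; rewrite ?E ?eqxx /=.
  by case: (HC (K q)) => _ _ /(_ p q Hpq); rewrite ?orbF.
Qed.

Definition rev_rel (B : rel 'I_n) : rel 'I_n := fun q p => B p q.

Lemma sto_rev B : sto B -> sto (rev_rel B).
Proof.
case=> H1 H2 H3; split; rewrite /rev_rel //.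
- by move=> x y z Hxy Hyz; apply: H2 Hyz Hxy.
- by move=> p q /H3; rewrite orbC.
Qed.

Lemma sto_perm (t : 'S_n) : sto (fun q p => (t q < t p)%N).
Proof.
split.
- by move=> p; rewrite ltnn.
- by move=> x y z; apply: ltn_trans.
- move=> p q Hpq; rewrite -neq_ltn; apply/negP => /eqP E.
  by move: Hpq; rewrite (perm_inj (val_inj E)) eqxx.
Qed.

Definition rank (B : rel 'I_n) (p : 'I_n) : nat := #|[set q | B q p]|.
Definition isrank (s : 'S_n) (B : rel 'I_n) : bool :=
  [forall p, nat_of_ord (s p) == rank B p].

Lemma rank_lt B p : sto B -> (rank B p < n)%N.
Proof.
case=> H1 _ _; rewrite /rank.
have : [set q | B q p] \subset [set~ p].
  by apply/fintype.subsetP=> q; rewrite !inE; apply: contraTneq => ->; rewrite H1.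
move/subset_leq_card; rewrite cardsC1 card_ord => H; apply: (leq_ltn_trans H).
by rewrite ltn_predL (leq_ltn_trans (leq0n p) (ltn_ord p)).
Qed.

Lemma rank_mono B q p : sto B -> B q p -> (rank B q < rank B p)%N.
Proof.
case=> H1 H2 _ Hqp; apply: proper_card; apply/properP; split.
  by apply/fintype.subsetP=> x; rewrite !inE => Hx; apply: H2 Hx Hqp.
by exists q; rewrite !inE ?H1.
Qed.

Lemma rank_inj B : sto B -> injective (rank B).
Proof.
move=> HB p q E; apply/eqP; apply: contraT => Hpq.
case: (HB) => _ _ /(_ p q Hpq) /orP[] /(rank_mono HB); rewrite E ltnn //.
Qed.

Lemma isrank_ex B : sto B -> exists s : 'S_n, isrank s B.
Proof.
move=> HB.
pose g (p : 'I_n) : 'I_n := Ordinal (rank_lt p HB).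
have ginj : injective g.
  by move=> p q /(congr1 val) /= /(rank_inj HB).
exists (perm ginj); apply/forallP=> p; by rewrite permE.
Qed.

Lemma isrank_lt s B : sto B -> isrank s B -> forall q p, (s q < s p)%N = B q p.
Proof.
move=> HB /forallP Hs q p; rewrite (eqP (Hs q)) (eqP (Hs p)).
apply/idP/idP; last exact: rank_mono.
move=> Hlt; case: (eqVneq q p) => [E|Hqp]; first by move: Hlt; rewrite E ltnn.
case: (HB) => _ _ /(_ q p Hqp) /orP[//|/(rank_mono HB)] H.
by move: (ltn_trans H Hlt); rewrite ltnn.
Qed.

End Order.

Section Core.
Variables (R : realType) (n : nat) (T : finType) (iota : T -> int) (f : T -> R).
Hypothesis f_ge0 : forall x, 0 <= f x.

Definition Round := ({ffun 'I_n -> T} * {perm 'I_n})%type.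

Definition wt (r : Round) : R := (\prod_(p : 'I_n) f (r.1 p)) / (n`!)%:R.

Definition Cv (B : rel 'I_n) (tau : 'S_n) (v : int) : rel 'I_n :=
  if 0 < v then B else if v < 0 then rev_rel B else (fun q p => (tau q < tau p)%N).

Definition refine (r : Round) (B : rel 'I_n) : rel 'I_n :=
  lexr (fun p => iota (r.1 p)) (Cv B r.2).

Lemma sto_refine r B : sto B -> sto (refine r B).
Proof.
move=> HB; apply: sto_lexr => v; rewrite /Cv.
case: ifP => _; first exact: HB.
case: ifP => _; first exact: sto_rev.
exact: sto_perm.
Qed.

Definition sameNZ (r : Round) : rel 'I_n :=
  fun q p => (iota (r.1 q) == iota (r.1 p)) && (iota (r.1 p) != 0).

Definition andrel (E F : rel 'I_n) : rel 'I_n := fun q p => E q p && F q p.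

Fixpoint Z k (B : rel 'I_n) (s : 'S_n) : R :=
  match k with
  | 0 => (isrank s B)%:R
  | k'.+1 => \sum_(r : Round) wt r * Z k' (refine r B) s
  end.

Fixpoint ZE k (B E : rel 'I_n) (s : 'S_n) : R :=
  match k with
  | 0 => ([forall p, forall q, ~~ E p q] && isrank s B)%:R
  | k'.+1 => \sum_(r : Round) wt r * ZE k' (refine r B) (andrel E (sameNZ r)) s
  end.

Fixpoint M k (E : rel 'I_n) : R :=
  match k with
  | 0 => ([forall p, forall q, ~~ E p q])%:R
  | k'.+1 => \sum_(r : Round) wt r * M k' (andrel E (sameNZ r))
  end.

Lemma wt_ge0 r : 0 <= wt r.
Proof. by apply: divr_ge0; [apply: prodr_ge0 => p _; exact: f_ge0|exact: ler0n]. Qed.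

Lemma Z_ge0 k B s : 0 <= Z k B s.
Proof.
elim: k B => [|k IH] B /=; first exact: ler0n.
by apply: sumr_ge0 => r _; apply: mulr_ge0; [exact: wt_ge0|exact: IH].
Qed.

Lemma ZE_ge0 k B E s : 0 <= ZE k B E s.
Proof.
elim: k B E => [|k IH] B E /=; first exact: ler0n.
by apply: sumr_ge0 => r _; apply: mulr_ge0; [exact: wt_ge0|exact: IH].
Qed.

Lemma ZE_le_Z k B E s : ZE k B E s <= Z k B s.
Proof.
elim: k B E => [|k IH] B E /=; first by case: (isrank s B); rewrite ?andbT ?andbF ?ler_nat ?leq_b1.
by apply: ler_sum => r _; apply: ler_wpM2l; [exact: wt_ge0|exact: IH].
Qed.

Definition ract (t : 'S_n) (r : Round) : Round := ([ffun p => r.1 (t p)], (t * r.2)%g).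
Definition relt (t : 'S_n) (B : rel 'I_n) : rel 'I_n := fun q p => B (t q) (t p).

Lemma ractK t : cancel (ract t) (ract t^-1).
Proof.
move=> [w tau]; rewrite /ract /=; congr (_, _).
  by apply/ffunP => p; rewrite !ffunE permKV.
by rewrite mulgA mulVg mul1g.
Qed.

Lemma ract_inj t : injective (ract t).
Proof. exact: can_inj (ractK t). Qed.

Lemma wt_act t r : wt (ract t r) = wt r.
Proof.
rewrite /wt /=; congr (_ / _).
rewrite [RHS](reindex_inj (@perm_inj _ t)); apply: eq_bigr => p _.
by rewrite ffunE.
Qed.

Lemma refine_act t r B : refine (ract t r) (relt t B) = relt t (refine r B).
Proof.
apply: funext => q; apply: funext => p.
rewrite /refine /relt /lexr /Cv /rev_rel /= !ffunE.
by case: ifP => _ //; case: ifP => _ //=; rewrite !permM.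
Qed.

Lemma sameNZ_act t r : sameNZ (ract t r) = relt t (sameNZ r).
Proof.
by apply: funext => q; apply: funext => p; rewrite /sameNZ /relt /= !ffunE.
Qed.

Lemma andrel_act t E F : andrel (relt t E) (relt t F) = relt t (andrel E F).
Proof. by []. Qed.

Lemma rank_act t B p : rank (relt t B) p = rank B (t p).
Proof.
rewrite /rank -[RHS](card_preimset _ (@perm_inj _ t)).
by apply: eq_card => q; rewrite !inE.
Qed.

Lemma isrank_act t s B : isrank (t * s)%g (relt t B) = isrank s B.
Proof.
apply/forallP/forallP => H p.
  by move: (H (t^-1 p)%g); rewrite rank_act permM permKV.
by rewrite rank_act permM; exact: H.
Qed.

Lemma forall_act t (E : rel 'I_n) :
  [forall p, forall q, ~~ relt t E p q] = [forall p, forall q, ~~ E p q].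
Proof.
apply/forallP/forallP => H p; apply/forallP => q.
  by move: (forallP (H (t^-1 p)%g) (t^-1 q)%g); rewrite /relt !permKV.
exact: (forallP (H (t p)) (t q)).
Qed.

Lemma sum_act t (F : Round -> R) : \sum_r F r = \sum_r F (ract t r).
Proof. exact: (reindex_inj (@ract_inj t)). Qed.

Lemma Z_act k t B s : Z k (relt t B) (t * s)%g = Z k B s.
Proof.
elim: k B => [|k IH] B /=; first by rewrite isrank_act.
rewrite (sum_act t); apply: eq_bigr => r _.
by rewrite wt_act refine_act IH.
Qed.

Lemma ZE_act k t B E s : ZE k (relt t B) (relt t E) (t * s)%g = ZE k B E s.
Proof.
elim: k B E => [|k IH] B E /=; first by rewrite isrank_act forall_act.
rewrite (sum_act t); apply: eq_bigr => r _.
by rewrite wt_act refine_act sameNZ_act andrel_act IH.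
Qed.

Definition symr (E : rel 'I_n) := forall q p, E q p = E p q.

Lemma ZE_indep k B B' E s : symr E ->
  (forall q p, ~~ E q p -> B q p = B' q p) -> ZE k B E s = ZE k B' E s.
Proof.
elim: k B B' E => [|k IH] B B' E sE HB /=.
  case: forallP => //= H.
  have -> : B = B'.
    apply: funext => q; apply: funext => p; apply: HB.
    exact: (forallP (H q) p).
  by [].
apply: eq_bigr => r _; congr (_ * _); apply: IH.
  by move=> q p; rewrite /andrel /sameNZ sE eq_sym; case: eqP => [E1|] //; rewrite E1.
move=> q p; rewrite /andrel /sameNZ /refine /lexr /Cv /rev_rel.
case: (iota (r.1 q) =P iota (r.1 p)) => [E1|] /=; last by rewrite !orbF.
rewrite E1 ?eqxx /= => HE; congr (_ || _).
case: ifP => [H0|_]; first by rewrite HB //; rewrite (gt_eqF H0) andbT in HE.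
case: ifP => [H0|//]; rewrite /= HB //; rewrite (lt_eqF H0) andbT in HE; by rewrite sE.
Qed.

Lemma sum_ZE k B E : sto B -> M k E <= \sum_(s : 'S_n) ZE k B E s.
Proof.
elim: k B E => [|k IH] B E HB /=.
  case: (isrank_ex HB) => s0 Hs0.
  rewrite (bigD1 s0) //= Hs0 andbT -[X in X <= _]addr0 lerD2l.
  by apply: sumr_ge0 => s _; exact: ler0n.
rewrite exchange_big /=; apply: ler_sum => r _.
rewrite -mulr_sumr; apply: ler_wpM2l; first exact: wt_ge0.
by apply: IH; apply: sto_refine.
Qed.

End Core.

Lemma card_ltord n (p : 'I_n) : #|[set q : 'I_n | (q < p)%N]| = p.
Proof.
have le : (p <= n)%N := ltnW (ltn_ord p).
rewrite (_ : [set q : 'I_n | _] = widen_ord le @: [set: 'I_p]).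
  by rewrite card_imset ?cardsT ?card_ord //; by move=> i j /(congr1 val) /= E; apply: val_inj.
apply/finset.setP => q; rewrite !inE; apply/idP/imsetP => [Hq|[i _ ->]] /=.
  by exists (Ordinal Hq); rewrite ?inE //; apply: val_inj.
exact: ltn_ord.
Qed.

Definition ltrel n : rel 'I_n := fun q p => (q < p)%N.

Lemma sto_ltrel n : sto (@ltrel n).
Proof.
split; rewrite /ltrel.
- by move=> p; rewrite ltnn.
- by move=> x y z; apply: ltn_trans.
- by move=> p q; rewrite -neq_ltn.
Qed.

Lemma isrank_ltrel n (s : 'S_n) : isrank s (@ltrel n) -> s = 1%g.
Proof.
move=> /forallP H; apply/permP => p; apply/eqP; rewrite -val_eqE /=; apply/eqP.
by rewrite perm1 (eqP (H p)) /rank /ltrel card_ltord.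
Qed.

Fixpoint powk (R : realType) n (P : 'S_n -> R) k (s : 'S_n) : R :=
  match k with
  | 0 => (s == 1%g)%:R
  | k'.+1 => \sum_(t : 'S_n) P t * powk P k' (t^-1 * s)%g
  end.

Section Core2.
Variables (R : realType) (n : nat) (T : finType) (iota : T -> int) (f : T -> R).
Hypothesis f_ge0 : forall x, 0 <= f x.

Local Notation wt := (@wt R n T f).
Local Notation refine := (@refine n T iota).
Local Notation sameNZ := (@sameNZ n T iota).
Local Notation Z := (@Z R n T iota f).
Local Notation ZE := (@ZE R n T iota f).
Local Notation M := (@M R n T iota f).

Definition Qd (s : 'S_n) : R := \sum_(r : Round n T) wt r * (isrank s (refine r (@ltrel n)))%:R.

Lemma Qd_ge0 s : 0 <= Qd s.
Proof. by apply: sumr_ge0 => r _; apply: mulr_ge0; [exact: wt_ge0|exact: ler0n]. Qed.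

Lemma Z_le_powk k s : Z k (@ltrel n) s <= powk Qd k s.
Proof.
elim: k s => [|k IH] s /=.
  case Hs: (isrank s (@ltrel n)); last by rewrite ler0n.
  by rewrite (isrank_ltrel Hs) eqxx.
apply: (@le_trans _ _ (\sum_t Qd t * Z k (@ltrel n) (t^-1 * s)%g)); last first.
  by apply: ler_sum => t _; apply: ler_wpM2l; [exact: Qd_ge0|exact: IH].
rewrite /Qd; under [X in _ <= X]eq_bigr do rewrite mulr_suml.
rewrite exchange_big /=; apply: ler_sum => r _.
under [X in _ <= X]eq_bigr do rewrite -mulrA.
rewrite -mulr_sumr; apply: ler_wpM2l; first exact: wt_ge0.
have Hs := sto_refine iota r (@sto_ltrel n).
case: (isrank_ex Hs) => t0 Ht0.
rewrite (bigD1 t0) //= Ht0 mul1r.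
have -> : Z k (refine r (@ltrel n)) s = Z k (@ltrel n) (t0^-1 * s)%g.
  rewrite -[RHS](Z_act _ _ _ t0) mulKVg; congr (Z _ _ _).
  apply: funext => q; apply: funext => p.
  by rewrite /relt /ltrel (isrank_lt Hs Ht0).
rewrite -[X in X <= _]addr0 lerD2l; apply: sumr_ge0 => t _.
by apply: mulr_ge0; [exact: ler0n|exact: Z_ge0].
Qed.

Definition E0 : rel 'I_n := fun q p => q != p.

Lemma ZE_unif k s : ZE k (@ltrel n) E0 s = ZE k (@ltrel n) E0 1%g.
Proof.
rewrite -[RHS](ZE_act iota f k s) mulg1.
have -> : relt s E0 = E0.
  by apply: funext => q; apply: funext => p; rewrite /relt /E0 (inj_eq (@perm_inj _ s)).
apply: ZE_indep.
  by move=> q p; rewrite /E0 eq_sym.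
move=> q p; rewrite /E0 negbK => /eqP ->.
by rewrite /relt /ltrel !ltnn.
Qed.

Lemma ZE_lower k s : M k E0 <= (n`!)%:R * ZE k (@ltrel n) E0 s.
Proof.
apply: (le_trans (sum_ZE iota f_ge0 k E0 (@sto_ltrel n))).
under eq_bigr do rewrite (ZE_unif k).
by rewrite sumr_const card_Sn mulr_natl ZE_unif.
Qed.

Definition Tm : R := \sum_(r : Round n T) wt r.
Definition S (q p : 'I_n) : R := \sum_(r : Round n T) wt r * (sameNZ r q p)%:R.

Definition irr (E : rel 'I_n) := forall p, E p p = false.

Lemma S_ge0 q p : 0 <= S q p.
Proof. by apply: sumr_ge0 => r _; apply: mulr_ge0; [exact: wt_ge0|exact: ler0n]. Qed.

Lemma M_lower k E : symr E -> irr E ->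
  Tm ^+ k - \sum_(p : 'I_n) \sum_(q : 'I_n | (q < p)%N) (E q p)%:R * S q p ^+ k <= M k E.
Proof.
elim: k E => [|k IH] E sE iE /=.
  case: forallP => H /=; first by rewrite expr0 lerBlDr lerDl; apply: sumr_ge0 => p _;
     apply: sumr_ge0 => q _; rewrite expr0 mulr1 ler0n.
  have [p [q Epq]] : exists p q, E p q.
    apply: contra_notP H => H p; apply/forallP => q; apply/negP => Epq; apply: H.
    by exists p, q.
  have Hpq : p != q by apply: contraTneq Epq => ->; rewrite iE.
  wlog lt_qp : p q Epq Hpq / (q < p)%N.
    move=> W; case: (ltngtP q p) => [lt|lt|E']; first exact: (W p q).
      by apply: (W q p); rewrite // 1?sE // eq_sym.
    by move: Hpq; rewrite -(inj_eq val_inj) /= E' eqxx.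
  rewrite expr0 subr_le0 (bigD1 p) //= (bigD1 q) //= [E q p]sE Epq expr0 mulr1.
  rewrite -addrA lerDl; apply: addr_ge0; first by apply: sumr_ge0 => i _; rewrite expr0 mulr1 ler0n.
  by apply: sumr_ge0 => i _; apply: sumr_ge0 => j _; rewrite expr0 mulr1 ler0n.
have H1 : forall r, Tm ^+ k * wt r - \sum_(p : 'I_n) \sum_(q : 'I_n | (q < p)%N)
      (E q p)%:R * S q p ^+ k * (wt r * (sameNZ r q p)%:R) <= wt r * M k (andrel E (sameNZ r)).
  move=> r; rewrite mulrC.
  apply: le_trans (ler_wpM2l (wt_ge0 f_ge0 r) (IH _ _ _)); first last.
  - by move=> p; rewrite /andrel iE.
  - move=> q p; rewrite /andrel /sameNZ sE eq_sym; case: eqP => [E1|] //; by rewrite E1.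
  rewrite mulrBr lerB // mulr_sumr; apply: ler_sum => p _; rewrite mulr_sumr.
  apply: ler_sum => q _; rewrite /andrel.
  case: (E q p); case: (sameNZ r q p); rewrite /= ?mul0r ?mulr0 ?mul1r ?mulr1 //.
  by rewrite mulrC.
apply: le_trans; last exact: (ler_sum _ (fun r _ => H1 r)).
rewrite sumrB -mulr_sumr -/Tm exprSr lerB //.
rewrite exchange_big /=; apply: ler_sum => p _.
rewrite exchange_big /=; apply: ler_sum => q _.
by rewrite -mulr_sumr -/(S q p) exprSr mulrA.
Qed.


Lemma sum_round (F : Round n T -> R) :
  \sum_(r : Round n T) F r = \sum_(w : {ffun 'I_n -> T}) \sum_(tau : 'S_n) F (w, tau).
Proof. by rewrite pair_bigA; apply: eq_bigr => [[w tau]] _. Qed.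

Lemma fact_neq0 : (n`!)%:R != 0 :> R.
Proof. by rewrite pnatr_eq0 -lt0n fact_gt0. Qed.

Lemma sum_tau (c : R) : \sum_(tau : 'S_n) c / (n`!)%:R = c.
Proof. by rewrite sumr_const card_Sn -[LHS]mulr_natr divfK // fact_neq0. Qed.

Definition msum : R := \sum_(x : T) f x.

Lemma Tm_val : Tm = msum ^+ n.
Proof.
rewrite /Tm sum_round.
under eq_bigr do rewrite /wt /= sum_tau.
by rewrite /msum -(bigA_distr_bigA (fun (j : 'I_n) (x : T) => f x)) /= prodr_const card_ord.
Qed.

Definition csum : R := \sum_(x : T | iota x != 0) f x ^+ 2.

Hypothesis iota_inj : injective iota.
Hypothesis msum_le1 : msum <= 1.

Lemma msum_ge0 : 0 <= msum.
Proof. by apply: sumr_ge0 => x _; exact: f_ge0. Qed.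

Lemma sum_eqx (x : T) : \sum_(y : T) f y * (y == x)%:R = f x.
Proof.
rewrite (bigD1 x) //= eqxx mulr1 big1 ?addr0 // => y /negbTE ->.
by rewrite mulr0.
Qed.

Lemma S_le q p : q != p -> S q p <= csum.
Proof.
move=> Hqp; rewrite /S sum_round.
under eq_bigr => w _ do under eq_bigr => tau _ do rewrite /wt /sameNZ /= mulrAC.
under eq_bigr do rewrite sum_tau.
pose G (x : T) (j : 'I_n) (y : T) : R :=
  f y * (if j == q then (y == x)%:R else 1) * (if j == p then (y == x)%:R else 1).
have Pj : forall x (w : {ffun 'I_n -> T}),
    \prod_j G x j (w j) = (\prod_j f (w j)) * (w q == x)%:R * (w p == x)%:R.
  move=> x w; rewrite /G !big_split /= -!big_mkcond /= !big_pred1_eq.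
  by [].
have E1 : forall w : {ffun 'I_n -> T},
    (\prod_j f (w j)) * ((iota (w q) == iota (w p)) && (iota (w p) != 0))%:R =
    \sum_(x : T | iota x != 0) \prod_j G x j (w j).
  move=> w; rewrite [RHS](eq_bigr _ (fun x _ => Pj x w)).
  rewrite (inj_eq iota_inj).
  case: (eqVneq (w q) (w p)) => [Eqp|Nqp].
    rewrite Eqp ?eqxx /=; case: (boolP (iota (w p) != 0)) => Hz.
      rewrite (bigD1 (w p)) //= eqxx !mulr1 [X in _ = _ + X]big1 ?addr0 // => x /andP[_ /negbTE].
      by rewrite eq_sym => ->; rewrite mulr0.
    rewrite mulr0 [RHS]big1 // => x Hx.
    have /negbTE -> : w p != x by apply: contraNneq Hz => ->.
    by rewrite mulr0.
  rewrite mulr0 [RHS]big1 // => x _.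
  case: (eqVneq (w p) x) => [E|_]; last by rewrite mulr0.
  by rewrite -E (negbTE Nqp) mulr0 ?mul0r.
under eq_bigr do rewrite E1.
rewrite exchange_big /=; apply: ler_sum => x Hx.
rewrite -(bigA_distr_bigA (G x)) /=.
rewrite (bigD1 q) //= (bigD1 p) /=; last by rewrite eq_sym.
rewrite /G eqxx (negbTE Hqp) eq_sym (negbTE Hqp) eqxx.
under eq_bigr do rewrite mulr1.
rewrite sum_eqx.
under [X in f x * (X * _)]eq_bigr do rewrite mulr1.
rewrite sum_eqx mulrA -expr2.
apply: ler_piMr; first by apply: exprn_ge0; exact: f_ge0.
apply: prodr_ile1 => j /andP[Hjq Hjp].
rewrite (negbTE Hjq) (negbTE Hjp).
under eq_bigr do rewrite !mulr1.
by rewrite -/msum msum_ge0 msum_le1.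
Qed.


Lemma csum_ge0 : 0 <= csum.
Proof. by apply: sumr_ge0 => x _; apply: exprn_ge0; exact: f_ge0. Qed.

Lemma pairs_bound k :
  \sum_(p : 'I_n) \sum_(q : 'I_n | (q < p)%N) (E0 q p)%:R * S q p ^+ k
    <= ('C(n, 2))%:R * csum ^+ k.
Proof.
apply: (@le_trans _ _ (\sum_(p : 'I_n) \sum_(q : 'I_n | (q < p)%N) csum ^+ k)).
  apply: ler_sum => p _; apply: ler_sum => q Hqp.
  have Hn : q != p by rewrite -(inj_eq val_inj) /= neq_ltn Hqp.
  rewrite /E0 Hn mul1r; apply: lerXn2r; rewrite ?nnegrE ?S_ge0 ?csum_ge0 //.
  exact: (S_le Hn).

have Hc : forall p : 'I_n, \sum_(q : 'I_n | (q < p)%N) csum ^+ k = csum ^+ k *+ p.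
  move=> p; rewrite -[in RHS](card_ltord p) -sumr_const; apply: eq_bigl => q.
  by rewrite finset.inE.
rewrite (eq_bigr (fun p : 'I_n => csum ^+ k *+ p)); last by move=> p _; exact: Hc.
rewrite sumrMnr -[X in X <= _]mulr_natl; apply: ler_wpM2r; first by apply: exprn_ge0; exact: csum_ge0.
rewrite ler_nat -bin2_sum big_mkord.
by [].
Qed.

Lemma core_bound k s :
  msum ^+ (n * k) - ('C(n, 2))%:R * csum ^+ k <= (n`!)%:R * powk Qd k s.
Proof.
have sE0 : symr E0 by move=> q p; rewrite /E0 eq_sym.
have iE0 : irr E0 by move=> p; rewrite /E0 eqxx.
have h1 := M_lower k sE0 iE0.
have h2 := ZE_lower k s.
have h3 : ZE k (@ltrel n) E0 s <= powk Qd k s.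
  exact: le_trans (ZE_le_Z iota f_ge0 k (@ltrel n) E0 s) (Z_le_powk k s).
have h4 : msum ^+ (n * k) - ('C(n, 2))%:R * csum ^+ k <=
  Tm ^+ k - \sum_(p : 'I_n) \sum_(q : 'I_n | (q < p)%N) (E0 q p)%:R * S q p ^+ k.
  by rewrite Tm_val -exprM lerB // pairs_bound.
exact: le_trans h4 (le_trans h1 (le_trans h2 (ler_wpM2l (ler0n _ _) h3))).
Qed.

End Core2.

Lemma card_orb n (A B : pred 'I_n) : (forall q, A q -> B q -> False) ->
  #|[set q | A q || B q]| = (#|[set q | A q]| + #|[set q | B q]|)%N.
Proof.
move=> H; rewrite -cardsUI.
have -> : [set q | A q] :&: [set q | B q] = finset.set0.
  apply/finset.setP => q; rewrite !finset.inE; apply/negP => /andP[Aq Bq].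
  exact: H Aq Bq.
rewrite cards0 addn0; apply: eq_card => q; by rewrite !finset.inE.
Qed.

Lemma sv_rank n (T : finType) (iota : T -> int) (w : {ffun 'I_n -> T}) (tau : 'S_n) p :
  rank (refine iota (w, tau) (@ltrel n)) p = shuffle_value [ffun q => iota (w q)] tau p.
Proof.
rewrite /rank /refine /lexr /shuffle_value /= card_orb; last first.
  by move=> q /[swap] /andP[/eqP ->]; rewrite ltxx.
rewrite !ffunE; congr (_ + _)%N.
  by apply: eq_card => q; rewrite !finset.inE ffunE.
rewrite /Cv; case: ifP => H1.
  by apply: eq_card => q; rewrite !finset.inE ffunE.
case: ifP => H2.
  by apply: eq_card => q; rewrite !finset.inE ffunE.
have H0 : iota (w p) = 0.
  by apply/eqP; move: H1 H2; case: ltgtP.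
apply: eq_card => q; rewrite !finset.inE ffunE H0.
by [].
Qed.


Lemma Qd_shuffle (R : realType) n (T : finType) (iota : T -> int) (f : T -> R) s :
  Qd iota f s = \sum_(w : {ffun 'I_n -> T})
    (\prod_j f (w j)) * shuffle_cond R [ffun q => iota (w q)] s.
Proof.
rewrite /Qd sum_round; apply: eq_bigr => w _; rewrite /shuffle_cond.
rewrite -sumr_const [X in _ = _ * (X / _)]big_mkcond /= /wt /= -mulr_sumr mulrAC -mulrA; congr (_ * (_ * _)).
apply: eq_bigr => tau _; rewrite finset.inE.
have -> : isrank s (refine iota (w, tau) (@ltrel n)) =
  [forall p, nat_of_ord (s p) == shuffle_value [ffun q => iota (w q)] tau p].
  by apply: eq_forallb => p; rewrite sv_rank.
by case: ifP.
Qed.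

Section Glue.
Variables (R : realType) (g : R) (a b : nat -> R).
Hypotheses (hg : 0 <= g) (ha : forall i, 0 <= a i) (hb : forall i, 0 <= b i).

Definition TT N := ('I_1 + ('I_N + 'I_N))%type.
Definition iN N (x : TT N) : int :=
  match x with
  | inl _ => 0
  | inr (inl i) => Posz (nat_of_ord i).+1
  | inr (inr i) => Negz (nat_of_ord i)
  end.

Lemma iN_inj N : injective (@iN N).
Proof.
case=> [i|[i|i]] [j|[j|j]] //=.
- by rewrite (ord1 i) (ord1 j).
- by move=> [] /val_inj ->.
- by move=> [] /val_inj ->.
Qed.

Definition fN N (x : TT N) : R := letterp g a b (iN x).

Lemma fN_ge0 N x : 0 <= @fN N x.
Proof. by case: x => [i|[i|i]]; rewrite /fN /=. Qed.

Lemma msumN N : msum (@fN N) = g + series a N + series b N.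
Proof.
rewrite /msum big_sumType big_ord1 big_sumType /= /series /= -!(big_mkord xpredT) addrA.
by [].
Qed.

Lemma csumN N : csum (@iN N) (@fN N) =
  series (fun i => a i ^+ 2) N + series (fun i => b i ^+ 2) N.
Proof.
rewrite /csum big_sumType big_pred0 //= add0r big_sumType /= /series /=.
by congr (_ + _); rewrite big_mkord; apply: eq_bigl => i.
Qed.

End Glue.

Lemma fsum_setT (R : realType) (T : finType) (F : T -> \bar R) :
  (\sum_(x \in [set: T]) F x = \sum_(x : T) F x)%E.
Proof.
rewrite (fsbigE (index_enum T)) //.
- by apply: eq_bigl => x; rewrite in_setT.
- exact: index_enum_uniq.
- by move=> x _ /negP; rewrite mem_index_enum.
Qed.

Section Glue2.
Variables (R : realType) (n : nat) (g : R) (a b : nat -> R).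
Hypotheses (hg : 0 <= g) (ha : forall i, 0 <= a i) (hb : forall i, 0 <= b i).
Hypothesis hm : forall N, g + series a N + series b N <= 1.

Local Notation fNN N := (@fN R g a b N).
Local Notation QdN N := (@Qd R n (TT N) (@iN N) (@fN R g a b N)).

Definition iw N (w : {ffun 'I_n -> TT N}) : {ffun 'I_n -> int} := [ffun q => iN (w q)].

Lemma iw_inj N : injective (@iw N).
Proof.
move=> w1 w2 /ffunP H; apply/ffunP => p; move: (H p); rewrite !ffunE.
exact: iN_inj.
Qed.

Lemma ww_iw N (w : {ffun 'I_n -> TT N}) :
  word_weight g a b (iw w) = \prod_j fNN N (w j).
Proof. by apply: eq_bigr => j _; rewrite ffunE. Qed.

Lemma letterp_ge0 z : 0 <= letterp g a b z.
Proof. by case: z => [[|i]|i] /=. Qed.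

Lemma ww_ge0 (w : {ffun 'I_n -> int}) : 0 <= word_weight g a b w.
Proof. by apply: prodr_ge0 => j _; exact: letterp_ge0. Qed.

Lemma cond_ge0 (w : {ffun 'I_n -> int}) s : 0 <= shuffle_cond R w s.
Proof. by apply: divr_ge0; exact: ler0n. Qed.

Lemma cond_le1 (w : {ffun 'I_n -> int}) s : shuffle_cond R w s <= 1.
Proof.
rewrite /shuffle_cond ler_pdivrMr ?ltr0n ?fact_gt0 // mul1r ler_nat.
by rewrite -card_Sn max_card.
Qed.

Lemma sumW N : \sum_(w : {ffun 'I_n -> TT N}) \prod_j fNN N (w j) = msum (fNN N) ^+ n.
Proof.
by rewrite /msum -(bigA_distr_bigA (fun (j : 'I_n) (x : TT N) => fNN N x)) /= prodr_const card_ord.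
Qed.

Lemma msum_le1 N : msum (fNN N) <= 1.
Proof. by rewrite msumN. Qed.

Lemma msum_ge0' N : 0 <= msum (fNN N).
Proof. by apply: sumr_ge0 => x _; exact: fN_ge0. Qed.

Definition aterm s (w : {ffun 'I_n -> int}) : \bar R :=
  (word_weight g a b w * shuffle_cond R w s)%:E.

Lemma aterm_ge0 s w : (0 <= aterm s w)%E.
Proof. by rewrite lee_fin; apply: mulr_ge0; [exact: ww_ge0|exact: cond_ge0]. Qed.

Lemma sum_image N s :
  (\sum_(x \in (@iw N) @` [set: {ffun 'I_n -> TT N}]) aterm s x =
   (QdN N s)%:E)%E.
Proof.
rewrite fsbig_image; last by move=> x y _ _; exact: iw_inj.
rewrite fsum_setT sumEFin Qd_shuffle; congr (_%:E); apply: eq_bigr => w _.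
by rewrite ww_iw.
Qed.

Lemma Qd_le1 N s : QdN N s <= 1.
Proof.
rewrite Qd_shuffle; apply: (@le_trans _ _ (\sum_(w : {ffun 'I_n -> TT N}) \prod_j fNN N (w j))).
  apply: ler_sum => w _; apply: ler_piMr; last exact: cond_le1.
  by apply: prodr_ge0 => j _; exact: fN_ge0.
rewrite sumW; apply: exprn_ile1; [exact: msum_ge0'|exact: msum_le1].
Qed.

Definition invN N (z : int) : TT N :=
  match z with
  | Posz 0 => inl ord0
  | Posz i.+1 => if insub i is Some o then inr (inl o) else inl ord0
  | Negz i => if insub i is Some o then inr (inr o) else inl ord0
  end.

Lemma invNK N z : (absz z <= N)%N -> iN (invN N z) = z.
Proof.
case: z => [[|i]|i] //= H.
  by case: insubP => [o _ Ho|/negP]; rewrite /= ?Ho.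
by case: insubP => [o _ Ho|/negP]; rewrite /= ?Ho.
Qed.

Lemma esum_le1 s :
  (\esum_(w in [set: {ffun 'I_n -> int}]) aterm s w <= 1%:E)%E.
Proof.
apply: ge_ereal_sup => _ [X [finX _] <-].
case/finite_fsetP: finX => B ->.
pose N := (\max_(w <- finmap.enum_fset B) \max_(p : 'I_n) absz (w p))%N.
apply: (@le_trans _ _ (\sum_(x \in ((@iw N) @` [set: {ffun 'I_n -> TT N}])%classic) aterm s x)%E).
  apply: lee_fsum_nneg_subset.
  - exact: finite_fset.
  - exact: finite_image finite_finset.
  - move=> w; rewrite !inE /= => wB.
    exists [ffun p => invN N (w p)] => //.
    apply/ffunP => p; rewrite !ffunE invNK //.
    apply: (leq_trans _ (leq_bigmax_seq _ wB is_true_true)).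
    exact: (@leq_bigmax _ (fun p => absz (w p)) p).
  - by move=> t _; exact: aterm_ge0.
by rewrite sum_image lee_fin; exact: Qd_le1.
Qed.

Lemma Qd_le_shuffle1 N s : QdN N s <= shuffle1 g a b s.
Proof.
rewrite /shuffle1.
have H1 : ((QdN N s)%:E <=
    \esum_(w in [set: {ffun 'I_n -> int}]) aterm s w)%E.
  apply: esum_ge; exists ((@iw N) @` [set: {ffun 'I_n -> TT N}])%classic.
    by split; [exact: finite_image finite_finset|].
  by rewrite sum_image.
have H2 := esum_le1 s.
move: H1 H2; rewrite /aterm.
by case: (\esum_(_ in _) _)%E.
Qed.

End Glue2.
Local Open Scope classical_set_scope.

Lemma powk_mono (R : realType) n (P Q : 'S_n -> R) :
  (forall t, 0 <= Q t) -> (forall t, Q t <= P t) ->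
  forall k s, 0 <= powk Q k s /\ powk Q k s <= powk P k s.
Proof.
move=> HQ HQP; elim=> [|k IH] s /=; first by split; [exact: ler0n|].
split; first by apply: sumr_ge0 => t _; apply: mulr_ge0; [exact: HQ|exact: (IH _).1].
apply: ler_sum => t _; apply: ler_pM; [exact: HQ|exact: (IH _).1|exact: HQP|exact: (IH _).2].
Qed.

Lemma shufflek_powk (R : realType) n g (a b : nat -> R) k (s : 'S_n) :
  shufflek g a b k s = powk (shuffle1 g a b) k s.
Proof. by elim: k s => //= k IH s; apply: eq_bigr => t _; rewrite IH. Qed.

Lemma cvg_pow (R : realType) (u : nat -> R) (l : R) m :
  u @ \oo --> l -> (fun N => u N ^+ m) @ \oo --> l ^+ m.
Proof.
move=> hu; elim: m => [|m IH].
  have -> : (fun N => u N ^+ 0) = (fun _ => 1) by apply: funext => N; rewrite expr0.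
  by rewrite expr0; exact: cvg_cst.
have -> : (fun N => u N ^+ m.+1) = (u \* (fun N => u N ^+ m)).
  by apply: funext => N; rewrite exprS.
by rewrite exprS; exact: cvgM.
Qed.

Lemma series_nd (R : realType) (u : nat -> R) : (forall i, 0 <= u i) -> nondecreasing_seq (series u).
Proof.
move=> hu; apply/nondecreasing_seqP => N.
by rewrite /series /= big_nat_recr //= lerDl.
Qed.

Lemma series0 (R : realType) (u : nat -> R) : series u 0 = 0.
Proof. by rewrite /series /= big_geq. Qed.

Lemma series_ge0 (R : realType) (u : nat -> R) N : (forall i, 0 <= u i) -> 0 <= series u N.
Proof. by move=> hu; rewrite /series /=; apply: sumr_ge0 => i _. Qed.

Unset Implicit Arguments.
Theorem theorem7p1 (R : realType) (n k : nat) (g : R) (a b : nat -> R)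
  (hg : 0 <= g) (ha : forall i, 0 <= a i) (hb : forall i, 0 <= b i)
  (hca : cvgn (series a)) (hcb : cvgn (series b))
  (hsum : g + limn (series a) + limn (series b) = 1) :
  sep_dist (@shufflek R n g a b k) <=
    ('C(n, 2))%:R * (limn (series (fun i => a i ^+ 2)) + limn (series (fun i => b i ^+ 2))) ^+ k.
Proof.
set c := limn (series (fun i => a i ^+ 2)) + limn (series (fun i => b i ^+ 2)).
have la := nondecreasing_cvgn_le (series_nd ha) hca.
have lb := nondecreasing_cvgn_le (series_nd hb) hcb.
have la0 : 0 <= limn (series a) by apply: le_trans (la 0); rewrite series0.
have lb0 : 0 <= limn (series b) by apply: le_trans (lb 0); rewrite series0.
have hm N : g + series a N + series b N <= 1.
  by rewrite -hsum lerD // lerD.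
have sa1 N : series a N <= 1.
  by have := hm N; have := series_ge0 N hb; lra.
have sb1 N : series b N <= 1.
  by have := hm N; have := series_ge0 N ha; lra.
have a1 i : a i <= 1.
  apply: le_trans (sa1 i.+1); rewrite /series /= big_nat_recr //= lerDr.
  exact: (series_ge0 i ha).
have b1 i : b i <= 1.
  apply: le_trans (sb1 i.+1); rewrite /series /= big_nat_recr //= lerDr.
  exact: (series_ge0 i hb).
have sq_ge0 (u : nat -> R) : forall i, 0 <= u i ^+ 2 by move=> i; exact: sqr_ge0.
have sq_le (u : nat -> R) : (forall i, 0 <= u i) -> (forall i, u i <= 1) -> forall N,
    series (fun i => u i ^+ 2) N <= series u N.
  move=> hu hu1 N; rewrite /series /=; apply: ler_sum => i _.
  by rewrite expr2; apply: ler_piMr.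
have ca2 : cvgn (series (fun i => a i ^+ 2)).
  apply: nondecreasing_is_cvgn; first exact: series_nd.
  by exists 1 => _ [N _ <-]; apply: le_trans (sq_le _ ha a1 N) (sa1 N).
have cb2 : cvgn (series (fun i => b i ^+ 2)).
  apply: nondecreasing_is_cvgn; first exact: series_nd.
  by exists 1 => _ [N _ <-]; apply: le_trans (sq_le _ hb b1 N) (sb1 N).
have la2 := nondecreasing_cvgn_le (series_nd (sq_ge0 a)) ca2.
have lb2 := nondecreasing_cvgn_le (series_nd (sq_ge0 b)) cb2.
have key (s : 'S_n) N : (g + series a N + series b N) ^+ (n * k) - ('C(n, 2))%:R * c ^+ k <=
    (n`!)%:R * shufflek g a b k s.
  have core := core_bound (fN_ge0 hg ha hb (N:=N)) (@iN_inj N) (msum_le1 hm N) k s.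
  rewrite msumN in core.
  apply: le_trans _ (le_trans core _).
    apply: lerB => //; apply: ler_wpM2l; first exact: ler0n.
    rewrite csumN; apply: lerXn2r; rewrite ?nnegrE.
    - by apply: addr_ge0; apply: series_ge0.
    - apply: addr_ge0; [apply: (le_trans _ (la2 0))|apply: (le_trans _ (lb2 0))];
      by rewrite series0.
    - by apply: lerD.
  rewrite shufflek_powk ler_wpM2l ?ler0n //.
  have := @powk_mono R n (shuffle1 g a b) (Qd (@iN N) (fN g a b (N:=N))).
  move=> /(_ _ _ k s) [] //.
  - move=> t; exact: Qd_ge0 (fN_ge0 hg ha hb (N:=N)) t.
  - move=> t; exact: Qd_le_shuffle1.
have lim1 : (fun N => (g + series a N + series b N) ^+ (n * k)) @ \oo --> (1 : R).
  rewrite -(expr1n R (n * k)); apply: cvg_pow; rewrite -hsum.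
  by apply: cvgD; [apply: cvgD; [exact: cvg_cst|exact: hca]|exact: hcb].
have X (s : 'S_n) : 1 <= (n`!)%:R * shufflek g a b k s + ('C(n, 2))%:R * c ^+ k.
  suff : lim ((fun N => (g + series a N + series b N) ^+ (n * k)) @ \oo) <=
      (n`!)%:R * shufflek g a b k s + ('C(n, 2))%:R * c ^+ k.
    by rewrite (cvg_lim _ lim1).
  apply: limr_le; first exact: (cvgP _ lim1).
  by apply: nearW => N; rewrite -lerBlDr; exact: key s N.
have T (s : 'S_n) : 1 - shufflek g a b k s / unif R s <= ('C(n, 2))%:R * c ^+ k.
  by rewrite /unif invrK mulrC lerBlDr addrC; exact: X.
rewrite /sep_dist; apply: (big_ind (fun x => x <= ('C(n, 2))%:R * c ^+ k)).
- exact: T.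
- by move=> x y hx hy; rewrite ge_max hx hy.
- by move=> s _; exact: T.
Qed.
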